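(* Let $k\ge 2$ and $w=2^k-1$. Consider a line of $3w+2$ cells indexed $0,\dots,3w+1$ in which cells $0,\dots,w-1$ are empty, cells $w,\dots,2w-1$ are blocked, cells $2w,\dots,3w-1$ are empty, the frog is on cell $3w$, and cell $3w+1$ is empty (the line $E^wB^wE^wFE$). Let $\tilde Z$ be the sequence of jump lengths $$3w,\ \underbrace{1,\dots,1}_{w-1},\ w+1,\ \underbrace{1,\dots,1}_{w-1},\ 2.$$ Then the frog can perform $\tilde Z$ validly, and every valid execution of $\tilde Z$ visits every empty cell exactly once and ends with the frog on cell $3w+1$.
   Context: A frog on a line of cells performs a given sequence of positive jump lengths $J_1,J_2,\dots$; for each jump it chooses a direction, moving from position $p$ to $p+J_i$ or $p-J_i$. An execution is valid if every landing cell lies on the line, is not blocked, and has not been visited before (the starting cell counts as visited). *)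

(* Defs.v *)
From mathcomp Require Import all_boot.
Set Implicit Arguments. Unset Strict Implicit. Unset Printing Implicit Defensive.

(* An execution of the jump sequence [js] from cell [p] is recorded as the
   sequence [ls] of landing cells (one per jump).  Choosing direction +/- for
   jump j from p means the landing l satisfies l = p + j or p = l + j
   (the latter is p - j, required to be a cell, i.e. >= 0).
   [visited] is the list of cells visited so far (including the start). *)
Fixpoint valid_from (n : nat) (blocked : pred nat) (visited : seq nat)
    (p : nat) (js ls : seq nat) : bool :=
  match js, ls with
  | [::], [::] => true
  | j :: js', l :: ls' =>
      [&& (l == p + j) || (p == l + j), l < n, ~~ blocked l, l \notin visited
        & valid_from n blocked (l :: visited) l js' ls']
  | _, _ => false
  end.

Definition valid_exec (n : nat) (blocked : pred nat) (s : nat) (js ls : seq nat) :=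
  valid_from n blocked [:: s] s js ls.

Definition line_len (w : nat) := 3 * w + 2.
Definition line_blocked (w : nat) : pred nat := fun c => (w <= c) && (c < 2 * w).
Definition line_start (w : nat) := 3 * w.
Definition line_empty (w c : nat) : bool :=
  [&& c < line_len w, ~~ line_blocked w c & c != line_start w].

Definition Ztilde (w : nat) : seq nat :=
  3 * w :: nseq w.-1 1 ++ (w + 1) :: nseq w.-1 1 ++ [:: 2].

(* Main.v *)
Require Import Defs.
From mathcomp Require Import all_boot.
From mathcomp Require Import zify.

Lemma fwd n b m : forall p V js ls,
  p \in V -> (p == 0) || b p.-1 || (p.-1 \in V) ->
  valid_from n b V p (nseq m 1 ++ js) ls ->
  exists ls', ls = iota p.+1 m ++ ls' /\
    valid_from n b (rev (iota p.+1 m) ++ V) (p + m) js ls'.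
Proof.
elim: m => [|m IH] p V js ls Hp Hb /=.
  by move=> H; exists ls; rewrite addn0.
case: ls => [|l ls] //= /and5P [Hj Hl Hbl Hv Hr].
have El : l = p.+1.
  case/orP: Hj => /eqP E; first by rewrite E addn1.
  move: Hb; rewrite E /= addn1 /=.
  by rewrite (negbTE Hbl) (negbTE Hv).
subst l.
have [ls' [E1 E2]] := IH p.+1 (p.+1 :: V) js ls (mem_head _ _)
   ltac:(by rewrite /= in_cons Hp !orbT) Hr.
exists ls'; split; first by rewrite E1.
by rewrite rev_cons cat_rcons -addSnnS.
Qed.

Lemma bwd n b m : forall p V js ls',
  (forall i, 0 < i <= m -> [&& p + i < n, ~~ b (p + i) & p + i \notin V]) ->
  valid_from n b (rev (iota p.+1 m) ++ V) (p + m) js ls' ->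
  valid_from n b V p (nseq m 1 ++ js) (iota p.+1 m ++ ls').
Proof.
elim: m => [|m IH] p V js ls' H /=; first by rewrite addn0.
move=> Hr.
have /and3P [H1 H2 H3] := H 1 isT.
rewrite addn1 in H1 H2 H3.
rewrite addn1 eqxx H1 H2 H3 /=.
apply: IH.
  move=> i /andP [Hi Him].
  have /and3P [K1 K2 K3] := H i.+1 ltac:(by rewrite /= ltnS Him).
  rewrite -addSnnS in K1 K2 K3; rewrite K1 K2 in_cons (negbTE K3) orbF /=.
  apply/eqP; lia.
by move: Hr; rewrite rev_cons cat_rcons addSnnS.
Qed.

Lemma main_w (w : nat) (hw : 3 <= w) :
  (exists ls : seq nat,
      valid_exec (line_len w) (line_blocked w) (line_start w) (Ztilde w) ls) /\
  (forall ls : seq nat,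
      valid_exec (line_len w) (line_blocked w) (line_start w) (Ztilde w) ls ->
      (forall c, line_empty w c -> count_mem c ls = 1) /\
      last (line_start w) ls = 3 * w + 1).
Proof.
rewrite /valid_exec /Ztilde /line_start.
split.
  exists (0 :: iota 1 w.-1 ++ 2 * w :: iota (2 * w).+1 w.-1 ++ [:: 3 * w + 1]).
  rewrite /=.
  apply/and5P; split.
  - by rewrite add0n eqxx orbT.
  - rewrite /line_len; lia.
  - by rewrite /line_blocked; apply/negP => /andP [H _]; lia.
  - by rewrite in_cons orbF; apply/eqP; lia.
  apply: bwd.
    move=> i Hi; rewrite /line_len /line_blocked !in_cons orbF.
    apply/and3P; split; [lia | apply/negP => /andP [? ?]; lia | apply/negP => /orP [] /eqP; lia].
  rewrite /=; apply/and5P; split.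
  - apply/orP; left; apply/eqP; lia.
  - rewrite /line_len; lia.
  - by rewrite /line_blocked; apply/negP => /andP [? ?]; lia.
  - rewrite !(mem_cat, mem_rev, mem_iota, in_cons) orbF; apply/negP; lia.
  apply: bwd.
    move=> i Hi; rewrite /line_len /line_blocked !(mem_cat, mem_rev, mem_iota, in_cons) orbF.
    apply/and3P; split; [lia | apply/negP => /andP [? ?]; lia | apply/negP; lia].
  rewrite /=; apply/and5P; split.
  - apply/orP; left; apply/eqP; lia.
  - rewrite /line_len; lia.
  - by rewrite /line_blocked; apply/negP => /andP [? ?]; lia.
  - rewrite !(mem_cat, mem_rev, mem_iota, in_cons) orbF; apply/negP; lia.
  by [].
move=> ls; case: ls => [|l ls] //= /and5P [H1 H2 H3 H4 H5].
have El : l = 0.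
  move: H1 H2; rewrite /line_len => /orP [] /eqP; lia.
subst l.
have [ls1 [E1 R1]] := @fwd _ _ _ 0 [:: 0; 3 * w] _ _ (mem_head _ _) isT H5.
subst ls; clear H5.
case: ls1 R1 => [|l2 ls2] //= /and5P [K1 K2 K3 K4 K5].
have El : l2 = 2 * w.
  move: K1 K2; rewrite /line_len => /orP [] /eqP; lia.
subst l2.
have [ls3 [E3 R3]] := @fwd (line_len w) (line_blocked w) _ (2 * w) _ _ _ (mem_head _ _)
  ltac:(by rewrite /line_blocked; apply/orP; left; apply/orP; right; apply/andP; split; lia) K5.
subst ls2; clear K5.
case: ls3 R3 => [|l3 [|? ?]] //=; last by rewrite !andbF.
move=> /andP [L1 /andP [L2 /andP [L3 /andP [L4 _]]]].
have El : l3 = 3 * w + 1.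
  move: L1 L2 L4; rewrite /line_len !(mem_cat, mem_rev, mem_iota, in_cons) orbF.
  move=> /orP [] /eqP; lia.
subst l3.
split.
2: by rewrite last_cat /= last_cat.
move=> c; rewrite /line_empty /line_len /line_blocked /line_start => Hc.
rewrite /= !count_cat /= count_cat /= !count_uniq_mem ?iota_uniq // !mem_iota.
lia.
Qed.

Theorem mainTheorem6 (k : nat) (hk : 2 <= k) :
  let w := 2 ^ k - 1 in
  (exists ls : seq nat,
      valid_exec (line_len w) (line_blocked w) (line_start w) (Ztilde w) ls) /\
  (forall ls : seq nat,
      valid_exec (line_len w) (line_blocked w) (line_start w) (Ztilde w) ls ->
      (forall c, line_empty w c -> count_mem c ls = 1) /\
      last (line_start w) ls = 3 * w + 1).
Proof.
move=> w; apply: main_w.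
have : 2 ^ 2 <= 2 ^ k by apply: leq_pexp2l.
rewrite /w; lia.
Qed.
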